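(* Let $\mathcal{H}$ be a real Hilbert space, let $\ell\geq 0$, and let $f\colon \mathcal{H}\to\mathbb{R}$ be a convex and lower semicontinuous function. Then $f$ is $\ell$-Lipschitz if and only if $$\Vert x\Vert-\ell\leq \Vert \operatorname{prox}_f(x+y)-y\Vert \quad \text{for all } x,y\in\mathcal{H}.$$
   Context: For a proper convex lower semicontinuous $f$, $\operatorname{prox}_f(x)=\operatorname{argmin}_{u\in\mathcal{H}}\{f(u)+\tfrac12\Vert x-u\Vert^2\}$ (the minimizer exists and is unique). *)

(* Defs.v *)
From HB Require Import structures.
From mathcomp Require Import all_boot all_order all_algebra.
From mathcomp Require Import all_classical all_reals all_analysis.
Set Implicit Arguments. Unset Strict Implicit. Unset Printing Implicit Defensive.
Import Order.TTheory GRing.Theory Num.Theory.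
Import numFieldNormedType.Exports.
Local Open Scope classical_set_scope.
Local Open Scope ring_scope.

(* A real Hilbert space is then a complete normed space (completeNormedModType)
   equipped with such an inner product. *)
Definition inner_product_inducing_norm {R : realType} {V : normedModType R}
    (ip : V -> V -> R) : Prop :=
  [/\ (forall x y, ip x y = ip y x),
      (forall a x y z, ip (a *: x + y) z = a * ip x z + ip y z) &
      (forall x, `|x| ^+ 2 = ip x x)].

(* The proximal point of f at x: the (unique, when f is proper convex lsc on a
   Hilbert space) minimizer of u |-> f u + 1/2 ||x - u||^2, chosen by xget. *)
Definition prox {R : realType} {V : normedModType R} (f : V -> R) (x : V) : V :=
  xget 0 [set p : V | forall u : V,
    f p + 2^-1 * `|x - p| ^+ 2 <= f u + 2^-1 * `|x - u| ^+ 2].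

Definition lipschitz_with {R : realType} {V : normedModType R}
    (l : R) (f : V -> R) : Prop :=
  forall x y : V, `|f x - f y| <= l * `|x - y|.

(* Main.v *)
Require Import Defs.
From HB Require Import structures.
From mathcomp Require Import all_boot all_order all_algebra.
From mathcomp Require Import all_classical all_reals all_analysis.
From mathcomp Require Import ring lra.
Import Order.TTheory GRing.Theory Num.Theory.
Import numFieldNormedType.Exports.
Local Open Scope classical_set_scope.
Local Open Scope ring_scope.

Lemma limit_le (R : realType) (A B C : R) :
  (forall t : R, 0 < t -> t <= 1 -> A <= B + t * C) -> A <= B.
Proof.
move=> H; rewrite leNgt; apply/negP => AB.
have [C0|C0] := leP C 0.
  by have := H 1 ltr01 (lexx _); lra.
pose t := Num.min 1 ((A - B) / (2 * C)).
have t0 : 0 < t by rewrite lt_min ltr01 /= divr_gt0 ?subr_gt0 // mulr_gt0.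
have t1 : t <= 1 by rewrite ge_min lexx.
have tC : t * C <= (A - B) / 2.
  have : t <= (A - B) / (2 * C) by rewrite ge_min lexx orbT.
  rewrite -(ler_pM2r C0) => /le_trans; apply.
  have -> // : (A - B) / (2 * C) * C = (A - B) / 2.
  by field; rewrite gt_eqF.
have := H t t0 t1; lra.
Qed.


Lemma ip_lemmas (R : realType) (V : normedModType R) (ip : V -> V -> R) :
  inner_product_inducing_norm ip ->
  (forall x y, `|x - y| ^+ 2 = `|x| ^+ 2 - 2 * ip x y + `|y| ^+ 2) /\
  (forall x y, `|x + y| ^+ 2 = `|x| ^+ 2 + 2 * ip x y + `|y| ^+ 2) /\
  (forall a x y, ip x (a *: y) = a * ip x y).
Proof.
case=> sym lin nrm.
have ip0 z : ip 0 z = 0.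
  have := lin 1 0 0 z; rewrite scale1r addr0 mul1r => H.
  have : ip 0 z + ip 0 z - ip 0 z = 0 by rewrite -H subrr.
  by rewrite addrK.
have ipD x y z : ip (x + y) z = ip x z + ip y z.
  by have := lin 1 x y z; rewrite scale1r mul1r.
have ipZ a x z : ip (a *: x) z = a * ip x z.
  by have := lin a x 0 z; rewrite addr0 ip0 addr0.
have ipN x z : ip (- x) z = - ip x z.
  by rewrite -scaleN1r ipZ mulN1r.
have ipDr x y z : ip z (x + y) = ip z x + ip z y by rewrite !(sym z) ipD.
have ipNr x z : ip z (- x) = - ip z x by rewrite !(sym z) ipN.
have Hp x y : `|x + y| ^+ 2 = `|x| ^+ 2 + 2 * ip x y + `|y| ^+ 2.
  rewrite !nrm ipD !ipDr (sym y x); ring.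
split; [|split]; last by move=> a x y; rewrite !(sym x) ipZ.
- by move=> x y; rewrite Hp normrN ipNr; ring.
- exact: Hp.
Qed.

Arguments ip_lemmas {R V ip}.

Lemma convf (R : realType) (V : normedModType R) (f : V -> R) :
  convex_function (E := V) setT f ->
  forall (t : R) (x y : V), 0 <= t -> t <= 1 ->
  f (t *: x + (1 - t) *: y) <= t * f x + (1 - t) * f y.
Proof.
move=> fc t x y t0 t1.
have := fc (Itv01 t0 t1) x y; rewrite !in_setT => /(_ isT isT).
by [].
Qed.

Arguments convf {R V f}.

Lemma lsc_ball (R : realType) (V : normedModType R) (f : V -> R) :
  lower_semicontinuous (fun x : V => (f x)%:E) ->
  forall x a, a < f x -> exists2 d : R, 0 < d & forall y, `|x - y| < d -> a < f y.
Proof.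
move=> flsc x a ax.
have [W /nbhs_ballP [d d0 dW] HW] := flsc x a (ltac:(by rewrite lte_fin)).
exists d => // y xy; have : (a%:E < (f y)%:E)%E by apply: HW; apply: dW; rewrite -ball_normE.
by rewrite lte_fin.
Qed.

Lemma lower_affine (R : realType) (V : normedModType R) (f : V -> R) :
  convex_function (E := V) setT f ->
  lower_semicontinuous (fun x : V => (f x)%:E) ->
  exists a b : R, 0 <= b /\ forall u, a - b * `|u| <= f u.
Proof.
move=> fc flsc.
have [d d0 Hd] := @lsc_ball R V f flsc 0 (f 0 - 1) (ltac:(lra)).
exists (f 0 - 1), (2 / d); split; first by rewrite divr_ge0 // ltW.
move=> u.
have [ud|du] := ltP `|u| d.
  have := Hd u (ltac:(by rewrite sub0r normrN)).
  have : 0 <= 2 / d * `|u| by rewrite mulr_ge0 // divr_ge0 // ltW.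
  lra.
have u0 : 0 < `|u| by apply: lt_le_trans du.
pose t := d / (2 * `|u|).
have t0 : 0 < t by rewrite divr_gt0 // mulr_gt0.
have t1 : t <= 1.
  rewrite ler_pdivrMr ?mulr_gt0 // mul1r; lra.
have := convf fc t u 0 (ltW t0) t1; rewrite scaler0 addr0.
have tu : t * `|u| = d / 2 by rewrite /t; field; rewrite gt_eqF.
have := Hd (t *: u) (ltac:(rewrite sub0r normrN normrZ gtr0_norm // tu; lra)).
move=> h1 h2.
have h3 : t * (f 0 - 1 - 2 / d * `|u|) <= t * f u.
  rewrite mulrBr mulrBr (mulrC (2 / d)) mulrA tu.
  have -> : d / 2 * (2 / d) = 1 by field; rewrite gt_eqF.
  have : t * 1 <= 1 by rewrite mulr1.
  nra.
by rewrite -(ler_pM2l t0).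
Qed.

Lemma para (R : realType) (V : normedModType R) (ip : V -> V -> R) :
  inner_product_inducing_norm ip -> forall a u v : V,
  `|a - (2^-1 *: u + (1 - 2^-1) *: v)| ^+ 2 =
   (`|a - u| ^+ 2 + `|a - v| ^+ 2) / 2 - `|u - v| ^+ 2 / 4.
Proof.
move=> /ip_lemmas [Hm [Hp _]] a u v.
have h2 : (1 - 2^-1 : R) = 2^-1 by field.
have e : a - (2^-1 *: u + (1 - 2^-1) *: v) = 2^-1 *: ((a - u) + (a - v)).
  have -> : a - u + (a - v) = (a + a) - (u + v).
    by rewrite addrACA opprD.
  rewrite h2 -scalerDr scalerBr; congr (_ - _).
  rewrite scalerDr -scalerDl.
  have -> : (2^-1 + 2^-1 : R) = 1 by field.
  by rewrite scale1r.
  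
have e2 : (a - u) - (a - v) = v - u.
  by rewrite opprB addrC addrA subrK.
have HH := Hp (a - u) (a - v).
have HM := Hm (a - u) (a - v).
rewrite e2 in HM.
rewrite e normrZ ger0_norm ?invr_ge0 ?ler0n // exprMn HH (distrC u v).
by rewrite HM; field.
Qed.

Arguments para {R V ip}.

Lemma midg (R : realType) (V : normedModType R) (ip : V -> V -> R) (f : V -> R) :
  inner_product_inducing_norm ip -> convex_function (E := V) setT f ->
  forall (c : R) (a u v : V),
  f (2^-1 *: u + (1 - 2^-1) *: v) + c * `|a - (2^-1 *: u + (1 - 2^-1) *: v)| ^+ 2 <=
  ((f u + c * `|a - u| ^+ 2) + (f v + c * `|a - v| ^+ 2)) / 2 - c / 4 * `|u - v| ^+ 2.
Proof.
move=> Hip fc c a u v.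
have h1 := convf fc 2^-1 u v (ltac:(by rewrite invr_ge0 ler0n)) (ltac:(by rewrite invf_le1 ?ler1n ?ltr0n)).
rewrite (para Hip).
have -> : (1 - 2^-1 : R) = 2^-1 by field.
rewrite (_ : (1 - 2^-1 : R) = 2^-1) in h1; last by field.
have E : forall x y : R, x / 2 = 2^-1 * x by move=> x y; rewrite mulrC.
lra.
Qed.

Lemma sq_lb (R : realType) (b c s : R) : 0 < c -> c * s ^+ 2 - b * s >= - (b ^+ 2 / (4 * c)).
Proof.
move=> c0.
have : 0 <= c * (s - b / (2 * c)) ^+ 2 by rewrite mulr_ge0 ?sqr_ge0 // ltW.
have -> : c * (s - b / (2 * c)) ^+ 2 = c * s ^+ 2 - b * s + b ^+ 2 / (4 * c).
  by field; rewrite gt_eqF.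
lra.
Qed.

Arguments midg {R V ip f}.
Arguments lsc_ball {R V f}.
Arguments lower_affine {R V f}.

Lemma exist_min (R : realType) (V : completeNormedModType R) (ip : V -> V -> R) (f : V -> R) :
  inner_product_inducing_norm ip -> convex_function (E := V) setT f ->
  lower_semicontinuous (fun x : V => (f x)%:E) ->
  forall (a : V) (c : R), 0 < c ->
  exists q : V, forall u, f q + c * `|a - q| ^+ 2 <= f u + c * `|a - u| ^+ 2.
Proof.
move=> Hip fc flsc a c c0.
pose g u := f u + c * `|a - u| ^+ 2.
have [al [b [b0 Hab]]] := lower_affine fc flsc.
have glb u : al - b * `|a| - b ^+ 2 / (4 * c) <= g u.
  have := Hab u; have := @sq_lb R b c `|a - u| c0.
  have : b * `|u| <= b * (`|a| + `|a - u|).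
    apply: ler_wpM2l => //.
    by have := ler_normB a (a - u); rewrite opprB addrC subrK.
  rewrite /g; lra.
pose E := range g.
have hinf : has_inf E.
  split; first by exists (g 0), 0.
  by exists (al - b * `|a| - b ^+ 2 / (4 * c)) => y [u _ <-].
pose m := inf E.
have gm u : m <= g u by apply: (ge_inf hinf.2); exists u.
have /choice [w Hw] : forall n : nat, exists u, g u < m + n.+1%:R^-1.
  move=> n; have [_ [u _ <-] Hu] := @inf_adherent R E (n.+1%:R^-1) (ltac:(by rewrite invr_gt0 ltr0n)) hinf.
  by exists u.
have Hcau n k : `|w n - w k| ^+ 2 < 2 / c * (n.+1%:R^-1 + k.+1%:R^-1).
  have h1 := midg Hip fc c a (w n) (w k).
  have h2 := gm (2^-1 *: w n + (1 - 2^-1) *: w k).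
  have h3 := Hw n; have h4 := Hw k.
  have key : c * `|w n - w k| ^+ 2 < 2 * (n.+1%:R^-1 + k.+1%:R^-1).
    rewrite /g /= in h2 h3 h4.
    move: (n.+1%:R^-1) (k.+1%:R^-1) h3 h4 => i1 i2 h3 h4.
    lra.
  have -> : 2 / c * (n.+1%:R^-1 + k.+1%:R^-1) = c^-1 * (2 * (n.+1%:R^-1 + k.+1%:R^-1)).
    by rewrite mulrCA mulrA.
  by rewrite ltr_pdivlMl.
have Hcv : cvg (w @ \oo).
  apply: cauchy_cvg; apply: cauchy_exP => eps eps0.
  have e0 : 0 < c * eps ^+ 2 / 4 by rewrite divr_gt0 // mulr_gt0 // exprn_gt0.
  have [N _ HN] := near_infty_natSinv_lt (PosNum e0).
  exists (w N); exists N => // n /= Nn.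
  rewrite -ball_normE /ball_ /=.
  have h1 := HN N (leqnn N); have h2 := HN n Nn; have h3 := Hcau N n.
  rewrite /= in h1 h2.
  move: (N.+1%:R^-1) (n.+1%:R^-1) h1 h2 h3 => i1 i2 h1 h2 h3.
  have h4 : 2 / c * (i1 + i2) <= eps ^+ 2.
    rewrite -(ler_pM2l c0) mulrA (_ : c * (2 / c) = 2); last first.
      by rewrite mulrCA divff ?mulr1 // gt_eqF.
    move: h1 h2; move: (c * eps ^+ 2) => C h1 h2; lra.
  rewrite ltNge; apply/negP => h5.
  have : eps ^+ 2 <= `|w N - w n| ^+ 2 by rewrite !expr2; apply: ler_pM => //; apply: ltW.
  lra.
pose q := lim (w @ \oo).
have wq : w @ \oo --> q := Hcv.
exists q => u.
suff : g q <= m by have := gm u; rewrite /g; lra.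
rewrite leNgt; apply/negP => mq.
pose eps := (g q - m) / 3.
have eps0 : 0 < eps by rewrite divr_gt0 // subr_gt0.
have [d0 d0p Hd0] := lsc_ball flsc q (f q - eps) (ltac:(lra)).
pose s := `|a - q|.
have s0 : 0 <= s by rewrite /s normr_ge0.
pose dl := Num.min d0 (eps / (2 * c * (s + 1))).
have dl0 : 0 < dl.
  by rewrite lt_min d0p /= divr_gt0 // mulr_gt0 // ?mulr_gt0 //; lra.
have F1 : \forall n \near \oo, `|q - w n| < dl by move/cvgrPdist_lt : wq; apply.
have F2 := near_infty_natSinv_lt (PosNum eps0).
have [n [h1 h2]] := filter_ex (filterI F1 F2).
rewrite /= in h1 h2.
have dld0 : dl <= d0 by rewrite /dl ge_min lexx.
have dle : dl <= eps / (2 * c * (s + 1)) by rewrite /dl ge_min lexx orbT.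
have hf := Hd0 (w n) (lt_le_trans h1 dld0).
have hw := Hw n.
pose t := `|a - w n|.
have ts : s - dl <= t.
  have : s <= t + `|q - w n|.
    have := ler_normD (a - w n) (w n - q).
    by rewrite addrA subrK (distrC (w n)).
  lra.
have t0 : 0 <= t by rewrite /t normr_ge0.
have hts : s ^+ 2 - 2 * s * dl <= t ^+ 2.
  have [sd|sd] := leP dl s.
    have : (s - dl) ^+ 2 <= t ^+ 2.
      by rewrite !expr2; apply: ler_pM => //; lra.
    have : 0 <= dl ^+ 2 by rewrite sqr_ge0.
    rewrite !expr2; lra.
  have : 0 <= t ^+ 2 by rewrite sqr_ge0.
  have : s * s <= s * dl by apply: ler_wpM2l => //; apply: ltW.
  have : 0 <= s * dl by rewrite mulr_ge0 // ltW.
  rewrite !expr2; lra.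
have K0 : 0 < 2 * c * (s + 1) by rewrite mulr_gt0 ?mulr_gt0 //; lra.
have hsd : 2 * c * s * dl <= eps.
  have : dl * (2 * c * (s + 1)) <= eps by rewrite -ler_pdivlMr.
  have : 0 <= 2 * c * dl by rewrite mulr_ge0 ?mulr_ge0 // ltW.
  lra.
have hct : c * (s ^+ 2 - 2 * s * dl) <= c * t ^+ 2 by rewrite ler_wpM2l // ltW.
have eE : 3 * eps = g q - m by rewrite /eps; field.
rewrite /= in h2; rewrite /g /= -/s -/t in hw eE.
move: (n.+1%:R^-1) h2 hw => i h2 hw.
lra.
Qed.

Lemma vec1 (R : realType) (V : normedModType R) (z u p : V) (t : R) :
  z - (t *: u + (1 - t) *: p) = (z - p) - t *: (u - p).
Proof.
rewrite scalerBl scale1r scalerBr.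
rewrite addrCA opprD opprB -!addrA; congr (_ + _).

Qed.

Lemma ipZl (R : realType) (V : normedModType R) (ip : V -> V -> R) :
  inner_product_inducing_norm ip -> forall a x y, ip (a *: x) y = a * ip x y.
Proof.
case=> sym lin nrm a x y.
have ip0 z : ip 0 z = 0.
  have := lin 1 0 0 z; rewrite scale1r addr0 mul1r => H.
  have : ip 0 z + ip 0 z - ip 0 z = 0 by rewrite -H subrr.
  by rewrite addrK.
by have := lin a x 0 y; rewrite addr0 ip0 addr0.
Qed.

Definition ismin {R : realType} {V : normedModType R} (f : V -> R) (c : R) (a q : V) :=
  forall u, f q + c * `|a - q| ^+ 2 <= f u + c * `|a - u| ^+ 2.

Lemma varineq (R : realType) (V : normedModType R) (f : V -> R) :
  convex_function (E := V) setT f ->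
  forall z p, ismin f 2^-1 z p -> forall u, f p - f u <= `|z - p| * `|u - p|.
Proof.
move=> fc z p hp u.
apply: (@limit_le R _ _ (2^-1 * `|u - p| ^+ 2)) => t t0 t1.
have h1 := hp (t *: u + (1 - t) *: p).
have h2 := convf fc t u p (ltW t0) t1.
rewrite vec1 in h1.
have h3 : `|z - p - t *: (u - p)| <= `|z - p| + t * `|u - p|.
  by rewrite (le_trans (ler_normB _ _)) // normrZ ger0_norm // ltW.
have h4 : `|z - p - t *: (u - p)| ^+ 2 <= (`|z - p| + t * `|u - p|) ^+ 2.
  by rewrite !expr2; apply: ler_pM => //.
rewrite -(ler_pM2l t0).
move: h1 h2 h3 h4; set Z := `|z - p|; set U := `|u - p|; set W := `|_ - t *: _|.
move=> h1 h2 h3 h4.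
have e : t * (Z * U + t * (2^-1 * U ^+ 2)) = 2^-1 * ((Z + t * U) ^+ 2 - Z ^+ 2) by field.
rewrite e; lra.
Qed.

Lemma firstorder (R : realType) (V : normedModType R) (ip : V -> V -> R) (f : V -> R) :
  inner_product_inducing_norm ip -> convex_function (E := V) setT f ->
  forall c a q, 0 < c -> ismin f c a q ->
  forall u, f q - f u + 2 * c * ip (a - q) (u - q) <= 0.
Proof.
move=> Hip fc c a q c0 hq u.
have [Hm [_ HZ]] := ip_lemmas Hip.
apply: (@limit_le R _ _ (c * `|u - q| ^+ 2)) => t t0 t1.
have h1 := hq (t *: u + (1 - t) *: q).
have h2 := convf fc t u q (ltW t0) t1.
rewrite vec1 (Hm (a - q) (t *: (u - q))) HZ normrZ ger0_norm ?(ltW t0) // in h1.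
rewrite -(ler_pM2l t0) add0r.
move: h1 h2; set I := ip _ _; set U := `|u - q|; set A := `|a - q|.
move=> h1 h2.
have e : t * (t * (c * U ^+ 2)) = c * ((t * U) ^+ 2) by rewrite exprMn; ring.
rewrite e; move: (t * U) h1 => tU h1.
have e2 : t * (f q - f u + 2 * c * I) = t * f q - t * f u + 2 * c * (t * I) by ring.
rewrite e2.
have e3 : c * (A ^+ 2 - 2 * (t * I) + tU ^+ 2) = c * A ^+ 2 - 2 * c * (t * I) + c * tU ^+ 2 by ring.
rewrite e3 in h1.
lra.
Qed.

Arguments firstorder {R V ip f}.
Arguments ipZl {R V ip}.

Lemma shift_min (R : realType) (V : normedModType R) (ip : V -> V -> R) (f : V -> R) :
  inner_product_inducing_norm ip -> convex_function (E := V) setT f ->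
  forall c a q, 0 < c -> ismin f c a q ->
  ismin f 2^-1 (q + (2 * c) *: (a - q)) q.
Proof.
move=> Hip fc c a q c0 hq u.
have [Hm [_ HZ]] := ip_lemmas Hip.
have h := firstorder Hip fc c a q c0 hq u.
have -> : q + (2 * c) *: (a - q) - q = (2 * c) *: (a - q) by rewrite addrAC subrr add0r.
have -> : q + (2 * c) *: (a - q) - u = (2 * c) *: (a - q) - (u - q).
  by rewrite opprB addrA (addrC q).
rewrite Hm (ipZl Hip).
have : 0 <= `|u - q| ^+ 2 by rewrite sqr_ge0.
move: h; set I := ip _ _; move=> h.
lra.
Qed.

Lemma uniq_min (R : realType) (V : normedModType R) (ip : V -> V -> R) (f : V -> R) :
  inner_product_inducing_norm ip -> convex_function (E := V) setT f ->
  forall c a q1 q2, 0 < c -> ismin f c a q1 -> ismin f c a q2 -> q1 = q2.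
Proof.
move=> Hip fc c a q1 q2 c0 h1 h2.
have h := midg Hip fc c a q1 q2.
have h3 := h1 (2^-1 *: q1 + (1 - 2^-1) *: q2).
have h4 := h1 q2; have h5 := h2 q1.
have : c / 4 * `|q1 - q2| ^+ 2 <= 0 by lra.
rewrite pmulr_rle0 ?divr_gt0 // => hX.
have : `|q1 - q2| ^+ 2 = 0 by apply/eqP; rewrite eq_le hX sqr_ge0.
by move/eqP; rewrite sqrf_eq0 normr_eq0 subr_eq0 => /eqP.
Qed.

Lemma lip_bound (R : realType) (V : normedModType R) (f : V -> R) (l : R) :
  0 <= l -> lipschitz_with l f -> forall z p, ismin f 2^-1 z p -> `|z - p| <= l.
Proof.
move=> l0 fl z p hp.
have a0 : 0 <= `|z - p| by [].
have key : `|z - p| ^+ 2 <= l * `|z - p|.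
  apply: (@limit_le R _ _ (2^-1 * `|z - p| ^+ 2)) => t t0 t1.
  have h1 := hp (t *: z + (1 - t) *: p).
  rewrite vec1 in h1.
  have e1 : z - p - t *: (z - p) = (1 - t) *: (z - p) by rewrite scalerBl scale1r.
  have e2 : t *: z + (1 - t) *: p - p = t *: (z - p).
    by rewrite scalerBl scale1r scalerBr -addrA (addrAC p) subrr add0r.
  rewrite e1 normrZ ger0_norm ?subr_ge0 // in h1.
  have h2 := fl (t *: z + (1 - t) *: p) p.
  rewrite e2 normrZ ger0_norm ?(ltW t0) // in h2.
  have h3 := ler_norm (f (t *: z + (1 - t) *: p) - f p).
  move: h1 h2 h3; set a := `|z - p|; set F := f (_ + _) => h1 h2 h3.
  rewrite -(ler_pM2l t0).
  have e3 : ((1 - t) * a) ^+ 2 = a ^+ 2 - 2 * (t * a ^+ 2) + t * (t * a ^+ 2).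
    by ring.
  have e4 : t * (l * a + t * (2^-1 * a ^+ 2)) = l * (t * a) + 2^-1 * (t * (t * a ^+ 2)).
    by ring.
  have e5 : l * (t * a) = t * (l * a) by ring.
  rewrite e3 in h1; rewrite e4.
  move: (t * (t * a ^+ 2)) h1 => T2 h1.
  lra.
have [a00|a0p] := eqVneq `|z - p| 0; first by rewrite a00.
have ap : 0 < `|z - p| by rewrite lt_neqAle eq_sym a0p a0.
by rewrite -(ler_pM2r ap) -expr2.
Qed.

Arguments shift_min {R V ip f}.
Arguments lip_bound {R V f l}.
Arguments uniq_min {R V ip f}.
Arguments varineq {R V f}.
Arguments exist_min {R V ip f}.

Theorem proposition4 (R : realType) (V : completeNormedModType R)
    (ip : V -> V -> R) (Hip : inner_product_inducing_norm ip)
    (l : R) (hl : 0 <= l) (f : V -> R)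
    (fconv : convex_function (E := V) setT f)
    (flsc : lower_semicontinuous (fun x : V => (f x)%:E)) :
  lipschitz_with l f <->
  (forall x y : V, `|x| - l <= `|prox f (x + y) - y|).
Proof.
have pm z : ismin f 2^-1 z (prox f z).
  rewrite /prox; apply: xgetPex.
  have [q hq] := exist_min Hip fconv flsc z 2^-1 (ltac:(by rewrite invr_gt0 ltr0n)).
  by exists q.
split.
  move=> fl x y.
  have := lip_bound hl fl _ _ (pm (x + y)).
  set p := prox f (x + y) => h.
  have := ler_normD (x + y - p) (p - y).
  rewrite addrA subrK addrK; lra.
move=> H.
have Hb z : `|z - prox f z| <= l.
  by have := H (z - prox f z) (prox f z); rewrite subrK subrr normr0; lra.
have key a b : f a - f b <= l * `|a - b|.
  rewrite leNgt; apply/negP => hab.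
  pose eps := (f a - f b - l * `|a - b|) / 2.
  have eps0 : 0 < eps by rewrite divr_gt0 // subr_gt0.
  have [d d0 Hd] := lsc_ball flsc a (f a - eps) (ltac:(lra)).
  pose mu := Num.min d eps.
  have mu0 : 0 < mu by rewrite lt_min d0 eps0.
  pose K := l + l ^+ 2 + 1.
  have K0 : 0 < K by rewrite /K; have := sqr_ge0 l; lra.
  pose c := K / (2 * mu).
  have c0 : 0 < c by rewrite divr_gt0 // mulr_gt0.
  have c2 : 2 * c = K / mu by rewrite /c; field; rewrite gt_eqF.
  have c20 : 0 < 2 * c by rewrite mulr_gt0.
  have hmu x : mu <= x -> K <= 2 * c * x.
    move=> mx; rewrite c2 -mulrA; apply: ler_peMr; first exact: ltW.
    by rewrite mulrC ler_pdivlMr // mul1r.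
  have hc1 : l < 2 * c * d.
    have := hmu d (ltac:(by rewrite ge_min lexx)); have := sqr_ge0 l; rewrite /K; lra.
  have hc2 : l ^+ 2 < 2 * c * eps.
    have := hmu eps (ltac:(by rewrite ge_min lexx orbT)); rewrite /K; lra.
  have [q hq] := exist_min Hip fconv flsc a c c0.
  pose z := q + (2 * c) *: (a - q).
  have hz := shift_min Hip fconv c a q c0 hq.
  have pq : prox f z = q.
    by apply: (uniq_min Hip fconv 2^-1 z) => //; rewrite invr_gt0 ltr0n.
  have hzq := Hb z; rewrite pq /z addrAC subrr add0r normrZ ger0_norm ?(ltW c20) // in hzq.
  have aq : `|a - q| < d by rewrite -(ltr_pM2l c20); lra.
  have lq : l * `|a - q| < eps.
    rewrite -(ltr_pM2l c20).
    have -> : 2 * c * (l * `|a - q|) = l * (2 * c * `|a - q|) by ring.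
    have : l * (2 * c * `|a - q|) <= l * l by rewrite ler_wpM2l.
    rewrite expr2 in hc2; lra.
  have hf := Hd q aq.
  have hv := varineq fconv z q hz b.
  rewrite /z addrAC subrr add0r normrZ ger0_norm ?(ltW c20) // in hv.
  have h1 : 2 * c * `|a - q| * `|b - q| <= l * `|b - q| by rewrite ler_wpM2r.
  have h2 : l * `|b - q| <= l * `|a - b| + l * `|a - q|.
    rewrite -mulrDr ler_wpM2l // (distrC a b).
    exact: ler_distD.
  have e2 : 2 * eps = f a - f b - l * `|a - b| by rewrite /eps; field.
  lra.
move=> x y; rewrite ler_norml; apply/andP; split; last exact: key.
by have := key y x; rewrite distrC; lra.
Qed.
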